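(* For any set $\mathcal H$ of Pauli operators in $\mathcal P_n$, $\mathrm{rank}\,D^{(\mathcal H)}=\mathrm{rank}\,A^{(\mathcal H)}$.
   Context: $\mathcal P_n$ is the $n$-qubit Pauli group without phases; $\langle A,B\rangle=0$ if $A,B$ commute and $1$ otherwise. $\Gamma$ is a finite collection of supports $\gamma\subseteq\{1,\dots,n\}$; $\mathcal E_\gamma$ is the set of non-identity Paulis supported in $\gamma$, and $\mathcal E_\Gamma$ is the disjoint union of the $\mathcal E_\gamma$ (each element $e$ labeled by its support $\gamma_e$). For $h\in\mathcal P_n$, $h_\gamma$ is the restriction of $h$ to $\gamma$ (identity outside $\gamma$). $A^{(\mathcal H)}$ is the $|\mathcal H|\times|\mathcal E_\Gamma|$ matrix with $A^{(\mathcal H)}[h,e]=1$ if $h_{\gamma_e}=e$ and $0$ otherwise. $D^{(\mathcal H)}$ is the $|\mathcal H|\times|\mathcal E_\Gamma|$ matrix with $D^{(\mathcal H)}[h,e]=\langle h,e\rangle$. *)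

(* Defs.v *)
From HB Require Import structures.
From mathcomp Require Import all_boot all_order all_algebra.
Set Implicit Arguments. Unset Strict Implicit. Unset Printing Implicit Defensive.
Import GRing.Theory Num.Theory.
Local Open Scope ring_scope.

(* Single-qubit Pauli without phase, in symplectic (x,z) representation:
   I = (false,false), X = (true,false), Z = (false,true), Y = (true,true). *)
Definition pauliI : bool * bool := (false, false).

Definition Pauli (n : nat) := {ffun 'I_n -> bool * bool}.

Definition pauli_id (n : nat) : Pauli n := [ffun => pauliI].

Definition anticomm1 (a b : bool * bool) : bool := (a.1 && b.2) (+) (a.2 && b.1).

(* <A,B> = 0 if A and B commute, 1 otherwise *)
Definition symp (n : nat) (A B : Pauli n) : bool :=
  \big[addb/false]_(i < n) anticomm1 (A i) (B i).

Definition supp (n : nat) (p : Pauli n) : {set 'I_n} := [set i | p i != pauliI].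

Definition restrict (n : nat) (g : {set 'I_n}) (h : Pauli n) : Pauli n :=
  [ffun i => if i \in g then h i else pauliI].

Definition Egamma (n : nat) (g : {set 'I_n}) : {set Pauli n} :=
  [set p | (p != pauli_id n) && (supp p \subset g)].

(* E_Gamma : disjoint union of the E_gamma, each element labelled (gamma_e, e) *)
Definition EGamma (n : nat) (G : {set {set 'I_n}}) : {set {set 'I_n} * Pauli n} :=
  [set e | (e.1 \in G) && (e.2 \in Egamma e.1)].

Definition Amx (R : numFieldType) (n : nat) (G : {set {set 'I_n}}) (H : {set Pauli n})
  : 'M[R]_(#|H|, #|EGamma G|) :=
  \matrix_(i < #|H|, j < #|EGamma G|)
     (let h := enum_val i in let e := enum_val j in
      (restrict e.1 h == e.2)%:R).

Definition Dmx (R : numFieldType) (n : nat) (G : {set {set 'I_n}}) (H : {set Pauli n})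
  : 'M[R]_(#|H|, #|EGamma G|) :=
  \matrix_(i < #|H|, j < #|EGamma G|)
     (let h := enum_val i in let e := enum_val j in
      (symp h e.2)%:R).

(* Main.v *)
Require Import Defs.
From mathcomp Require Import all_boot all_order all_algebra.
From mathcomp Require Import ring.
Set Implicit Arguments. Unset Strict Implicit. Unset Printing Implicit Defensive.
Import GRing.Theory Num.Theory.
Local Open Scope ring_scope.

Section P.
Variable n : nat.
Implicit Types p q e r : Pauli n.

Definition padd p q : Pauli n :=
  [ffun i => ((p i).1 (+) (q i).1, (p i).2 (+) (q i).2)].

Lemma anticomm1_addl a b c :
  anticomm1 ((a.1 (+) b.1), (a.2 (+) b.2)) c = anticomm1 a c (+) anticomm1 b c.
Proof. by case: a b c => [[] []] [[] []] [[] []]. Qed.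

Lemma anticomm1C a b : anticomm1 a b = anticomm1 b a.
Proof. by case: a b => [[] []] [[] []]. Qed.

Lemma anticomm1I a : anticomm1 pauliI a = false.
Proof. by case: a => [[] []]. Qed.

Lemma anticomm1Ir a : anticomm1 a pauliI = false.
Proof. by case: a => [[] []]. Qed.

Lemma symp_addl p q e : symp (padd p q) e = symp p e (+) symp q e.
Proof.
rewrite /symp -big_split /=; apply: eq_bigr => i _.
by rewrite ffunE anticomm1_addl.
Qed.

Lemma sympC p q : symp p q = symp q p.
Proof. by apply: eq_bigr => i _; rewrite anticomm1C. Qed.

Lemma symp_idl e : symp (pauli_id n) e = false.
Proof. by rewrite /symp big1 // => i _; rewrite ffunE anticomm1I. Qed.

Lemma symp_restrict (g : {set 'I_n}) h e : supp e \subset g -> symp (restrict g h) e = symp h e.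
Proof.
move=> /subsetP sub; apply: eq_bigr => i _; rewrite ffunE.
case: ifP => // ig.
have : i \notin supp e by apply/negP => /sub; rewrite ig.
rewrite inE negbK => /eqP ->.
by rewrite anticomm1I anticomm1Ir.
Qed.

Lemma supp_restrict (g : {set 'I_n}) h : supp (restrict g h) \subset g.
Proof.
apply/subsetP => i; rewrite inE ffunE; by case: ifP => //; rewrite eqxx.
Qed.

Lemma padd_id_eq p q : (padd p q == pauli_id n) = (p == q).
Proof.
apply/eqP/eqP => [H|->]; last first.
  by apply/ffunP => i; rewrite !ffunE; case: (q i) => [[] []].
apply/ffunP => i; move/ffunP: H => /(_ i); rewrite !ffunE.
by case: (p i) (q i) => [[] []] [[] []].
Qed.

Lemma supp_padd (g : {set 'I_n}) p q : supp p \subset g -> supp q \subset g -> supp (padd p q) \subset g.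
Proof.
move=> /subsetP sp /subsetP sq; apply/subsetP => i; rewrite inE ffunE => H.
case: (boolP (i \in supp p)) => [/sp //|]; rewrite inE negbK => /eqP Hp.
case: (boolP (i \in supp q)) => [/sq //|]; rewrite inE negbK => /eqP Hq.
by move: H; rewrite Hp Hq.
Qed.

Lemma paddK q : involutive (padd ^~ q).
Proof. by move=> p; apply/ffunP => i; rewrite !ffunE /=; case: (p i) (q i) => [[] []] [[] []]. Qed.

End P.

Section C.
Variable R : numFieldType.
Variable n : nat.
Implicit Types p q e r : Pauli n.

Definition chi p e : R := (-1) ^+ (symp p e).

Lemma signN (b : bool) : (-1) ^+ (~~ b) = - ((-1) ^+ b : R).
Proof. by case: b; rewrite ?expr0 ?expr1 ?opprK. Qed.

Lemma signD (a b : bool) : ((-1) ^+ a * (-1) ^+ b : R) = (-1) ^+ (a (+) b).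
Proof. by case: a; case: b; rewrite /= ?expr0 ?expr1 ?mulr1 ?mul1r ?mulrNN ?mulr1. Qed.

Lemma chi_sum (g : {set 'I_n}) r : supp r \subset g -> r != pauli_id n ->
  \sum_(e | supp e \subset g) chi r e = 0.
Proof.
move=> sr Hr.
have [i Hri] : exists i, r i != pauliI.
  apply/existsP; apply: contraR Hr => /existsPn H; apply/eqP/ffunP => i.
  by rewrite ffunE; apply/eqP; move: (H i); rewrite negbK.
have ig : i \in g by apply: (subsetP sr); rewrite inE.
pose t : bool * bool := if (r i).1 then (false, true) else (true, false).
pose u : Pauli n := [ffun j => if j == i then t else pauliI].
have su : supp u \subset g.
  apply/subsetP => j; rewrite inE ffunE; case: (j =P i) => [->//|_]; by rewrite eqxx.
have Hu : symp r u = true.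
  rewrite /symp (bigD1 i) //= big1; last first.
    by move=> j /negbTE ji; rewrite ffunE ji anticomm1Ir.
  rewrite ffunE eqxx /t; move: Hri; by case: (r i) => [[] []].
set s := (\sum_(e | _) _).
have : s = - s.
  rewrite /s {1}(reindex_inj (can_inj (paddK u))) /= -sumrN.
  apply: eq_big => e.
    apply/idP/idP => H; last exact: supp_padd H su.
    by have := supp_padd H su; rewrite paddK.
  by move=> _; rewrite /chi sympC symp_addl (sympC u) Hu addbT sympC signN.
move/eqP; rewrite -subr_eq0 opprK -mulr2n mulrn_eq0 /= => /eqP //.
Qed.

Lemma chi_sum_id (g : {set 'I_n}) :
  \sum_(e | supp e \subset g) chi (pauli_id n) e = #|[pred e : Pauli n | supp e \subset g]|%:R.
Proof.
rewrite -sum1_card natr_sum.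
by apply: eq_big => [e|e _]; rewrite ?inE // /chi symp_idl.
Qed.

Lemma core (g : {set 'I_n}) (f : Pauli n -> R) :
  (forall e, e \in Egamma g -> \sum_(p in Egamma g) f p * (symp p e)%:R = 0) ->
  forall q, q \in Egamma g -> f q = 0.
Proof.
move=> Hf q qE.
pose S := fun p : Pauli n => supp p \subset g.
have EgE p : (p \in Egamma g) = S p && (p != pauli_id n).
  by rewrite inE andbC.
have Sid : S (pauli_id n).
  by apply/subsetP => i; rewrite inE ffunE eqxx.
pose f0 p := if p == pauli_id n then - \sum_(p in Egamma g) f p else f p.
have sumS (F : Pauli n -> R) : \sum_(p | S p) F p = F (pauli_id n) + \sum_(p in Egamma g) F p.
  rewrite (bigD1 (pauli_id n)) //=; congr (_ + _); apply: eq_bigl => p.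
  by rewrite EgE.
have f0E p : p \in Egamma g -> f0 p = f p.
  by rewrite EgE /f0 => /andP [_ /negbTE ->].
have Hchi e : S e -> \sum_(p | S p) f0 p * chi p e = 0.
  move=> Se.
  have -> : \sum_(p | S p) f0 p * chi p e =
     \sum_(p | S p) f0 p - 2%:R * \sum_(p | S p) f0 p * (symp p e)%:R.
    rewrite mulr_sumr -sumrB; apply: eq_bigr => p _.
    by rewrite /chi; case: (symp p e); rewrite ?expr1 ?expr0 ?mulr1 ?mulr0 ?subr0 //= mulrN1; ring.
  have f0id : f0 (pauli_id n) = - \sum_(p in Egamma g) f p by rewrite /f0 eqxx.
  rewrite !sumS f0id symp_idl mulr0 add0r (eq_bigr f (fun p H => f0E p H)) addNr add0r.
  rewrite (eq_bigr (fun p => f p * (symp p e)%:R)); last by move=> p /f0E ->.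
  have [->|ne] := eqVneq e (pauli_id n).
    by rewrite big1 ?mulr0 ?oppr0 // => p _; rewrite sympC symp_idl mulr0.
  by rewrite Hf ?mulr0 ?oppr0 // EgE Se ne.
have key : \sum_(e | S e) (\sum_(p | S p) f0 p * chi p e) * chi e q
           = f0 q * #|[pred e : Pauli n | S e]|%:R.
  under eq_bigr do rewrite mulr_suml.
  rewrite exchange_big /=.
  rewrite (eq_bigr (fun p => f0 p * \sum_(e | S e) chi (padd p q) e)); last first.
    move=> p _; rewrite mulr_sumr; apply: eq_bigr => e _.
    by rewrite -mulrA /chi signD (sympC e q) -symp_addl.
  rewrite (bigD1 q) /=; last by move: qE; rewrite EgE => /andP [].
  rewrite [X in _ + X]big1 ?addr0.
    rewrite (_ : padd q q = pauli_id n) ?chi_sum_id //.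
    by apply/eqP; rewrite padd_id_eq.
  move=> p /andP [Sp pq]; rewrite chi_sum ?mulr0 //.
    by apply: supp_padd => //; move: qE; rewrite EgE => /andP [].
  by rewrite padd_id_eq.
have : f0 q * #|[pred e : Pauli n | S e]|%:R = 0.
  by rewrite -key big1 // => e Se; rewrite Hchi ?mul0r.
have pos : (0 < #|[pred e : Pauli n | S e]|)%N.
  by apply/card_gt0P; exists (pauli_id n).
move/eqP; rewrite mulf_eq0 pnatr_eq0 => /orP [/eqP|].
  by rewrite f0E.
by move/eqP=> e0; rewrite e0 in pos.
Qed.

End C.

Section M.
Variable R : numFieldType.
Variable n : nat.
Variable G : {set {set 'I_n}}.
Variable H : {set Pauli n}.

Definition Bmx : 'M[R]_(#|EGamma G|, #|EGamma G|) :=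
  \matrix_(j' < #|EGamma G|, j < #|EGamma G|)
    (((enum_val j').1 == (enum_val j).1)%:R * (symp (enum_val j').2 (enum_val j).2)%:R).

Lemma EGammaE (x : {set 'I_n} * Pauli n) :
  (x \in EGamma G) = (x.1 \in G) && (x.2 != pauli_id n) && (supp x.2 \subset x.1).
Proof. by rewrite !inE andbA. Qed.

Lemma DAB : Dmx R G H = Amx R G H *m Bmx.
Proof.
apply/matrixP => i j; rewrite !mxE.
under eq_bigr do rewrite !mxE.
set h := enum_val i; set e := enum_val j.
have eE : e \in EGamma G by apply: enum_valP.
pose x0 := (e.1, restrict e.1 h).
pose F (x : {set 'I_n} * Pauli n) : R :=
  (restrict x.1 h == x.2)%:R * ((x.1 == e.1)%:R * (symp x.2 e.2)%:R).
have -> : \sum_(j0 < #|EGamma G|) (restrict (enum_val j0).1 h == (enum_val j0).2)%:R *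
      (((enum_val j0).1 == e.1)%:R * (symp (enum_val j0).2 e.2)%:R) = \sum_(x in EGamma G) F x.
  by rewrite [RHS]big_enum_val.
have FE x : F x = (x == x0)%:R * (symp x0.2 e.2)%:R.
  rewrite /F /x0; case: x => [s p] /=.
  have [->|ne] := eqVneq s e.1; last first.
    by rewrite mul0r mulr0 xpair_eqE (negbTE ne) mul0r.
  rewrite mul1r xpair_eqE eqxx /= eq_sym.
  by case: (eqVneq p (restrict e.1 h)) => [->|]; rewrite ?eqxx ?mul1r ?mul0r.
rewrite (eq_bigr _ (fun x _ => FE x)).
move: eE; rewrite EGammaE => /andP [/andP [e1G _] se].
have srs := symp_restrict h se.
case: (boolP (x0 \in EGamma G)) => H0.
  rewrite (bigD1 x0) //= big1 ?addr0 ?eqxx ?mul1r ?srs //.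
  by move=> x /andP [_ /negbTE ->]; rewrite mul0r.
rewrite big1; last by move=> x xE; case: eqVneq xE H0 => [->->|] //; rewrite mul0r.
move: H0; rewrite EGammaE e1G supp_restrict /= andbT negbK => /eqP Hid.
by rewrite -srs Hid symp_idl.
Qed.

Lemma Bfree : row_free Bmx.
Proof.
apply: inj_row_free => v Hv; apply/rowP => j0; rewrite !mxE.
set x0 := enum_val j0.
have EGx0 : x0 \in EGamma G by apply: enum_valP.
set gam := x0.1.
have gG : gam \in G by move: EGx0; rewrite EGammaE => /andP [/andP [] ].
pose f (p : Pauli n) : R := if (gam, p) \in EGamma G then v 0 (enum_rank_in EGx0 (gam, p)) else 0.
have Hx0 : x0.2 \in Egamma gam by move: (EGx0); rewrite inE => /andP [].
suff : f x0.2 = 0.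
  rewrite /f -surjective_pairing; clear f; rewrite /x0 enum_valK_in.
  by case: ifP => //; rewrite EGx0.
apply: (core _ Hx0) => e eE.
have pE : (gam, e) \in EGamma G by rewrite inE /= gG.
move/rowP: Hv => /(_ (enum_rank_in EGx0 (gam, e))); rewrite !mxE.
under eq_bigr do rewrite !mxE (enum_rankK_in EGx0 pE) /=.
pose F (x : {set 'I_n} * Pauli n) : R :=
   v 0 (enum_rank_in EGx0 x) * ((x.1 == gam)%:R * (symp x.2 e)%:R).
have -> : \sum_(j < #|EGamma G|) v 0 j * (((enum_val j).1 == gam)%:R * (symp (enum_val j).2 e)%:R)
   = \sum_(x in EGamma G) F x.
  by rewrite [RHS]big_enum_val; apply: eq_bigr => j _; rewrite /F enum_valK_in.
rewrite (bigID (fun x => x.1 == gam)) /= [X in _ + X]big1 ?addr0; last first.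
  by move=> x /andP [_ /negbTE xg]; rewrite /F xg mul0r mulr0.
rewrite (eq_bigl (fun x => (x.1 == gam) && (x.2 \in Egamma gam))); last first.
  move=> [s p] /=; rewrite inE /=.
  by case: (eqVneq s gam) => [->|]; rewrite ?gG ?andbT ?andbF.
have -> : \sum_(x | (x.1 == gam) && (x.2 \in Egamma gam)) F x =
    \sum_(s | s == gam) \sum_(p in Egamma gam) F (s, p).
  by rewrite pair_big; apply: eq_bigr => -[].
rewrite big_pred1_eq => H0; apply: etrans H0.
apply: eq_bigr => p pE'.
have pE2 : (gam, p) \in EGamma G by rewrite inE /= gG.
by rewrite /F /f pE2 /= eqxx mul1r.
Qed.

End M.

Theorem lemma2' (R : numFieldType) (n : nat) (G : {set {set 'I_n}}) (H : {set Pauli n}) :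
  \rank (Dmx R G H) = \rank (Amx R G H).
Proof. by rewrite DAB mxrankMfree // Bfree. Qed.

Theorem lemma2 (R : numFieldType) (n : nat) (G : {set {set 'I_n}}) (H : {set Pauli n}) :
  \rank (Dmx R G H) = \rank (Amx R G H).
Proof. exact: lemma2'. Qed.
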